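(* Let $(G,S,k)$ be an instance of \textsc{Edge Subset Feedback Vertex Set}, let $T=V(S)$, let $X$ be a dominant solution for $(G,S,k)$, and let $X_0=X\setminus T$. Then every nonempty set $Y\subseteq X_0$ sees at least $|Y|+2$ interesting components of $G-X-S$.
   Context: Graphs are finite and undirected and may contain loops and parallel edges (so cycles of length one and two are allowed). An instance of \textsc{Edge Subset Feedback Vertex Set} is $(G,S,k)$ with $G=(V,E)$, $S\subseteq E$, $k\in\mathbb{N}$. An $S$-cycle is a cycle containing at least one edge of $S$. A solution is a set $X\subseteq V$ with $|X|\le k$ such that $G-X$ contains no $S$-cycle. $V(S)$ is the set of vertices incident with an edge of $S$; $G-X-S$ is the graph obtained from $G$ by deleting the vertices of $X$ and the edges of $S$. A solution $X$ is dominant if it has minimum size among all solutions and, among minimum-size solutions, contains the maximum possible number of vertices of $T$. A connected component $K$ of $G-X-S$ is interesting if it contains a vertex of $T$. A vertex $x\in X_0$ sees a component $K$ if $x$ is adjacent in $G$ to some vertex of $K$; a set $Y\subseteq X_0$ sees $K$ if some $y\in Y$ sees $K$. *)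

(* Defs.v *)
(* A finite multigraph (loops and parallel edges allowed) is
   given by a finite vertex type V, a finite edge type E and an endpoint map
   ends : E -> V * V (the order of the pair is irrelevant; a loop has both
   components equal). *)
From mathcomp Require Import all_boot.
Set Implicit Arguments. Unset Strict Implicit. Unset Printing Implicit Defensive.

Section Graphs.
Variables (V E : finType) (ends : E -> V * V).

Definition joins (e : E) (a b : V) : bool :=
  (ends e == (a, b)) || (ends e == (b, a)).

Definition adjacent (a b : V) : bool := [exists e, joins e a b].

(* A cycle: distinct vertices v_0..v_{n-1} and distinct edges e_0..e_{n-1},
   n >= 1, with e_i joining v_i and v_{i+1 mod n}.  n = 1 is a loop, n = 2 a
   pair of parallel edges. *)
Definition is_cycle (vs : seq V) (es : seq E) : Prop :=
  0 < size es /\ size vs = size es /\ uniq vs /\ uniq es /\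
  all (fun p => joins p.1 p.2.1 p.2.2) (zip es (zip vs (rot 1 vs))).

Definition VS (S : {set E}) : {set V} :=
  [set v | [exists e in S, (v == (ends e).1) || (v == (ends e).2)]].

Definition no_S_cycle (S : {set E}) (X : {set V}) : Prop :=
  forall vs es, is_cycle vs es ->
    ~ (all (fun v => v \notin X) vs /\ has (fun e => e \in S) es).

Definition is_solution (S : {set E}) (k : nat) (X : {set V}) : Prop :=
  #|X| <= k /\ no_S_cycle S X.

Definition dominant (S : {set E}) (k : nat) (X : {set V}) : Prop :=
  is_solution S k X /\
  (forall Y, is_solution S k Y -> #|X| <= #|Y|) /\
  (forall Y, is_solution S k Y -> #|Y| = #|X| ->
     #|Y :&: VS S| <= #|X :&: VS S|).

Definition rGXS (S : {set E}) (X : {set V}) : rel V :=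
  fun x y => [&& x \notin X, y \notin X & [exists e, (e \notin S) && joins e x y]].

Definition is_component (S : {set E}) (X : {set V}) (K : {set V}) : bool :=
  [exists x, (x \notin X) && (K == [set y | connect (rGXS S X) x y])].

Definition interesting (T : {set V}) (K : {set V}) : bool := K :&: T != set0.

Definition sees (Y : {set V}) (K : {set V}) : bool :=
  [exists y in Y, [exists z in K, adjacent y z]].

End Graphs.

(* Main.v *)
Require Import Defs.
From mathcomp Require Import all_boot zify.
Set Implicit Arguments. Unset Strict Implicit. Unset Printing Implicit Defensive.

Section Lem.
Variables (V E : finType) (ends : E -> V * V) (S : {set E}).

Definition rho (Z : {set V}) (F : {set E}) : rel V :=
  fun x y => [&& x \notin Z, y \notin Z & [exists f, (f \notin F) && joins ends f x y]].

Lemma joinsC f x y : joins ends f x y = joins ends f y x.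
Proof. by rewrite /joins orbC. Qed.

Lemma rho_sym Z F : symmetric (rho Z F).
Proof.
move=> x y; rewrite /rho; apply/and3P/and3P => -[h1 h2 /existsP[f /andP[h3 h4]]];
  split=> //; apply/existsP; exists f; by rewrite h3 joinsC.
Qed.

Lemma rho_csym Z F : connect_sym (rho Z F).
Proof. exact: sym_connect_sym (@rho_sym Z F). Qed.

Lemma rho_sub (Z Z' : {set V}) (F F' : {set E}) : Z \subset Z' -> F \subset F' -> subrel (rho Z' F') (rho Z F).
Proof.
move=> sZ sF x y /and3P[h1 h2 /existsP[f /andP[h3 h4]]].
apply/and3P; split.
- by apply: contra h1; apply: (subsetP sZ).
- by apply: contra h2; apply: (subsetP sZ).
- apply/existsP; exists f; rewrite h4 andbT; by apply: contra h3; apply: (subsetP sF).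
Qed.

Lemma conn_sub (Z Z' : {set V}) (F F' : {set E}) x y : Z \subset Z' -> F \subset F' ->
  connect (rho Z' F') x y -> connect (rho Z F) x y.
Proof.
move=> sZ sF; apply: connect_sub => u w h; apply: connect1; exact: rho_sub h.
Qed.

Lemma joins_end f x y : joins ends f x y -> ((ends f).1 == x) || ((ends f).1 == y).
Proof. by rewrite /joins => /orP[] /eqP ->; rewrite eqxx ?orbT. Qed.

Lemma joins_end2 f x y : joins ends f x y -> ((ends f).2 == x) || ((ends f).2 == y).
Proof. by rewrite /joins => /orP[] /eqP ->; rewrite eqxx ?orbT. Qed.

Lemma joins_VS f x y : f \in S -> joins ends f x y -> x \in VS ends S.
Proof.
move=> fS; rewrite /joins inE => /orP[] /eqP h; apply/existsP; exists f;
  by rewrite fS h eqxx ?orbT.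
Qed.

Lemma path_notin Z F x p : path (rho Z F) x p -> all (fun v => v \notin Z) p.
Proof.
elim: p x => //= y p IH x /andP[/and3P[_ -> _] /IH]. by [].
Qed.

Lemma path_edges Z F x p : path (rho Z F) x p -> uniq (x :: p) ->
  exists es : seq E, [/\ size es = size p, uniq es, all (fun f => f \notin F) es,
    all (fun f => ((ends f).1 \in x :: p) && ((ends f).2 \in x :: p)) es &
    all (fun q => joins ends q.1 q.2.1 q.2.2) (zip es (zip (belast x p) p))].
Proof.
elim: p x => [|y p IH] x /=.
  by move=> _ _; exists [::].
move=> /andP[/and3P[_ _ /existsP[f /andP[fF jf]]] pth] /andP[xn un].
have [es [s1 u1 a1 a2 a3]] := IH y pth un.
exists (f :: es); split => //=.
- by rewrite s1.
- rewrite u1 andbT; apply/negP => fes.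
  move/allP: a2 => /(_ f fes) /andP[h1 h2].
  have hx : x \in y :: p by move: jf h1 h2; rewrite /joins => /orP[] /eqP -> /=.
  by rewrite hx in xn.
- by rewrite fF a1.
- apply/andP; split.
    move: jf; rewrite /joins => /orP[] /eqP -> /=; by rewrite !inE !eqxx ?orbT.
  apply: sub_all a2 => g /andP[g1 g2]; apply/andP; split; by rewrite in_cons ?g1 ?g2 orbT.
- by rewrite jf a3.
Qed.

Lemma cycle_of_conn (Z : {set V}) e a b : e \in S -> joins ends e a b ->
  a \notin Z -> b \notin Z -> connect (rho Z [set e]) b a -> ~ no_S_cycle ends S Z.
Proof.
move=> eS jab aZ bZ /connectP[p0 pp0 Ea]; subst a.
clear aZ; move: jab; case: (shortenP pp0) => p pth up _ {pp0 p0} jab NC.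
have allp := path_notin pth.
case: p pth up allp jab => [|c p] pth up allp jab.
  apply: (NC [:: b] [:: e]).
    split=> //; split=> //; split=> //; split=> //=; by rewrite jab.
  by rewrite /= bZ eS.
have [es [s1 u1 a1 a2 a3]] := path_edges pth up.
apply: (NC (b :: c :: p) (rcons es e)); last first.
  split; first by rewrite /= bZ.
  by apply/hasP; exists e => //; rewrite mem_rcons mem_head.
split; first by rewrite size_rcons.
split; first by rewrite size_rcons s1.
split=> //; split.
  rewrite rcons_uniq u1 andbT; apply/negP => /(allP a1); by rewrite inE eqxx.
rewrite rot1_cons.
rewrite [b :: c :: p]lastI zip_rcons; last by rewrite size_belast.
rewrite zip_rcons; last by rewrite size_zip size_belast s1 minnn.
by rewrite all_rcons /= jab a3.
Qed.


Lemma conn_of_cycle (Z : {set V}) vs es e : is_cycle ends vs es ->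
  all (fun v => v \notin Z) vs -> e \in es ->
  exists a b, [/\ joins ends e a b, a \in vs, b \in vs & connect (rho Z [set e]) a b].
Proof.
move=> [n0 [sz [uv [ue allz]]]] az ees.
case: vs sz uv allz az => [|v vs'] sz uv allz az; first by rewrite -sz in n0.
set n := size es in n0 sz.
rewrite rot1_cons in allz.
have szr : size (rcons vs' v) = n by rewrite size_rcons.
have Hj : forall j, j < n ->
    joins ends (nth e es j) (nth v (v :: vs') j) (nth v (rcons vs' v) j).
  move=> j jn.
  have jz : j < size (zip es (zip (v :: vs') (rcons vs' v))).
    rewrite !size_zip szr sz; lia.
  move/(all_nthP (e, (v, v))): allz => /(_ j jz).
  rewrite nth_zip; last by rewrite size_zip szr -sz minnn.
  by rewrite nth_zip // size_rcons.
have Hw : forall j, j < n ->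
    nth v (rcons vs' v) j = if j.+1 < n then nth v (v :: vs') j.+1 else v.
  move=> j jn; rewrite nth_rcons /=.
  have -> : size vs' = n.-1 by rewrite -sz.
  case: ifP => h1; case: ifP => h2 //; try lia.
  by move/eqP: h2 => ->; rewrite ifF //; lia.
set i := index e es.
have iln : i < n by rewrite index_mem.
have ei : nth e es i = e by rewrite nth_index.
have memv : forall j, j < n -> nth v (v :: vs') j \in v :: vs'.
  by move=> j jn; apply: mem_nth; rewrite sz.
have memr : forall j, j < n -> nth v (rcons vs' v) j \in v :: vs'.
  move=> j jn; have := (@mem_nth _ v (rcons vs' v) j); rewrite szr => /(_ jn).
  by rewrite mem_rcons.
have notZ : forall x, x \in v :: vs' -> x \notin Z by move=> x; apply: (allP az).
have step : forall j, j < n -> j != i ->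
    connect (rho Z [set e]) (nth v (v :: vs') j) (nth v (rcons vs' v) j).
  move=> j jn ji; apply: connect1; apply/and3P; split.
  - exact/notZ/memv.
  - exact/notZ/memr.
  apply/existsP; exists (nth e es j); rewrite Hj // andbT in_set1.
  by rewrite -{2}ei nth_uniq.
have A : forall j, j <= i -> connect (rho Z [set e]) v (nth v (v :: vs') j).
  elim=> [|j IH] ji; first exact: connect0.
  apply: connect_trans (IH (ltnW ji)) _.
  have := step j (leq_ltn_trans (ltnW ji) iln); rewrite Hw; last lia.
  have -> : j.+1 < n by lia.
  apply; rewrite neq_ltn; apply/orP; left; lia.
have B : forall m, m < n.-1 - i ->
    connect (rho Z [set e]) (nth v (v :: vs') (n.-1 - m)) v.
  elim=> [|m IH] mi.
    have := step n.-1 _ _; rewrite Hw; last lia.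
    have -> : (n.-1).+1 < n = false by lia.
    rewrite subn0; apply; first lia.
    rewrite neq_ltn; apply/orP; right; lia.
  apply: connect_trans (IH (ltnW mi)).
  have := step (n.-1 - m.+1) _ _; rewrite Hw; last lia.
  have -> : (n.-1 - m.+1).+1 < n by lia.
  have -> : (n.-1 - m.+1).+1 = n.-1 - m by lia.
  apply; first lia.
  rewrite neq_ltn; apply/orP; right; lia.
exists (nth v (v :: vs') i), (nth v (rcons vs' v) i); split.
- by rewrite -{1}ei Hj.
- exact: memv.
- exact: memr.
rewrite Hw //; case: ifP => h.
  rewrite rho_csym; apply: connect_trans _ (A i (leqnn i)).
  have := B (n.-1 - i.+1) _; have -> : n.-1 - (n.-1 - i.+1) = i.+1 by lia.
  by apply; lia.
by rewrite rho_csym; apply: A.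
Qed.

Lemma first_hit (r : rel V) (P : {set V}) x p : path r x p -> x \notin P ->
  connect [rel u w | [&& r u w, u \notin P & w \notin P]] x (last x p) \/
  exists v y, [/\ connect [rel u w | [&& r u w, u \notin P & w \notin P]] x v,
                  r v y & y \in P].
Proof.
elim: p x => [|y p IH] x /=; first by left; exact: connect0.
move=> /andP[rxy pth] xP.
case yP: (y \in P).
  by right; exists x, y; split => //; exact: connect0.
have [h|[v [z [h1 h2 h3]]]] := IH y pth (negbT yP).
  by left; apply: connect_trans h; apply: connect1; rewrite /= rxy xP yP.
right; exists v, z; split=> //; apply: connect_trans h1; apply: connect1.
by rewrite /= rxy xP yP.
Qed.

Lemma joins_in f x z u w : joins ends f x z -> joins ends f u w -> (x == u) || (x == w).
Proof.
rewrite /joins => /orP[] /eqP -> /orP[] /eqP [] h1 h2; subst; by rewrite eqxx ?orbT.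
Qed.

Lemma path_avoid (Z : {set V}) (F : {set E}) e x z y p :
  joins ends e x z -> x \notin y :: p -> path (rho Z F) y p -> path (rho Z (e |: F)) y p.
Proof.
move=> jx xn; apply: (sub_in_path (P := mem (y :: p))); last by apply/allP.
move=> u w uin win /and3P[h1 h2 /existsP[f /andP[fF jf]]].
apply/and3P; split=> //; apply/existsP; exists f; rewrite jf andbT in_setU1 negb_or fF andbT.
apply/eqP => fe; subst f.
by case/orP: (joins_in jx jf) => /eqP xu; subst x; rewrite ?uin ?win in xn.
Qed.

Lemma find_step (Z : {set V}) (F : {set E}) x p : F \subset S ->
  path (rho Z F) x p -> uniq (x :: p) -> ~~ connect (rho Z S) x (last x p) ->
  exists a b e, [/\ e \in S, e \notin F, joins ends e a b & [/\ a \notin Z, b \notin Z,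
    connect (rho Z (e |: F)) x a & connect (rho Z (e |: F)) b (last x p)]].
Proof.
move=> FS; elim: p x => [|y p IH] x /=.
  by move=> _ _; rewrite connect0.
move=> /andP[rxy pth] /andP[xn un] nc.
case hS: (rho Z S x y).
  have nc' : ~~ connect (rho Z S) y (last y p).
    by apply: contra nc; apply: connect_trans; apply: connect1.
  have [a [b [e [eS eF jab [aZ bZ c1 c2]]]]] := IH y pth un nc'.
  exists a, b, e; split=> //; split=> //; apply: connect_trans c1; apply: connect1.
  move: hS => /and3P[h1 h2 /existsP[f /andP[fS jf]]].
  apply/and3P; split=> //; apply/existsP; exists f; rewrite jf andbT in_setU1 negb_or.
  apply/andP; split; first by apply/eqP => fe; subst f; rewrite eS in fS.
  by apply: contra fS; apply: (subsetP FS).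
move: rxy => /and3P[h1 h2 /existsP[e /andP[eF je]]].
have eS : e \in S.
  apply: contraFT hS => eS; apply/and3P; split=> //; apply/existsP; exists e; by rewrite eS.
exists x, y, e; split=> //; split=> //; 
have pth' := path_avoid je xn pth.
by apply: (path_connect pth'); apply: mem_last.
Qed.

Lemma conn_T (Z : {set V}) (F : {set E}) v p : path (rho Z F) v p ->
  last v p \in VS ends S -> exists2 t, t \in VS ends S & connect (rho Z S) v t.
Proof.
elim: p v => [|w p IH] v /=; first by move=> _ h; exists v => //; exact: connect0.
move=> /andP[/and3P[h1 h2 /existsP[f /andP[fF jf]]] pth] hl.
case fS: (f \in S).
  by exists v; [exact: joins_VS jf | exact: connect0].
have [t t1 t2] := IH w pth hl.
exists t => //; apply: connect_trans t2; apply: connect1.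
apply/and3P; split=> //; apply/existsP; exists f; by rewrite fS jf.
Qed.

Definition cmp (X : {set V}) (u : V) : {set V} := [set y | connect (rho X S) u y].

Definition sepP (X : {set V}) (N : {set V}) :=
  exists D : {set E}, [/\ D \subset S, {in D, forall f, (ends f).1 \notin X},
    #|D| <= #|cmp X @: N| - 1 &
    forall u v, u \in N -> v \in N -> connect (rho X D) u v -> connect (rho X S) u v].

Lemma arith (n1 n2 k1 k2 u i t : nat) : 0 < k1 -> 0 < k2 -> n1 <= k1 - 1 ->
  n2 <= k2 - 1 -> u + i = n1 + n2 -> t <= 1 + u -> t <= k1 + k2 - 1.
Proof. lia. Qed.

Lemma sep_step (X : {set V}) (N : {set V}) : no_S_cycle ends S X ->
  (forall N' : {set V}, N' \subset N -> #|cmp X @: N'| < #|cmp X @: N| -> sepP X N') ->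
  sepP X N.
Proof.
move=> NC IH.
case: (pickP [pred uv : V * V | [&& uv.1 \in N, uv.2 \in N,
          connect (rho X set0) uv.1 uv.2 & ~~ connect (rho X S) uv.1 uv.2]]); last first.
  move=> good; exists set0; split.
  - exact: sub0set.
  - by move=> f; rewrite in_set0.
  - by rewrite cards0.
  move=> u v uN vN cuv; move: (good (u, v)) => /=; rewrite uN vN cuv /=.
  by move/negbFE.
case=> u v /= /and4P[uN vN cuv ncuv].
move/connectP: cuv => [p0 pp0 Ev]; subst v.
move: ncuv vN; case: (shortenP pp0) => p pth up _ ncuv vN {pp0 p0}.
have [a [b [e [eS _ jab [aZ bZ c1 c2]]]]] := find_step (sub0set S) pth up ncuv.
rewrite setU0 in c1 c2.
set v' := last u p in ncuv c2 vN.
have nuv : ~~ connect (rho X [set e]) u v'.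
  apply/negP => cuv; apply: (cycle_of_conn eS jab aZ bZ _ NC).
  have h1 : connect (rho X [set e]) v' u by rewrite rho_csym.
  exact: connect_trans (connect_trans c2 h1) c1.
have v'N : v' \in N by exact: vN.
set N1 := [set w in N | connect (rho X [set e]) u w].
set N2 := N :\: N1.
have uN1 : u \in N1 by rewrite inE uN connect0.
have vN2 : v' \in N2 by rewrite !inE v'N (negbTE nuv).
have NU : N = N1 :|: N2.
  apply/setP => w; rewrite !inE; by case: (w \in N); case: connect.
have eSS : [set e] \subset S by rewrite sub1set.
have disj : cmp X @: N1 :&: cmp X @: N2 = set0.
  apply/setP => K; rewrite !inE; apply/negP => /andP[/imsetP[w1 w1N K1] /imsetP[w2 w2N K2]].
  move: w2N; rewrite !inE => /andP[]; rewrite negb_and => /orP[]; first by move/negP.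
  move=> nc2 _; move: w1N; rewrite inE => /andP[_ c1'].
  have : w2 \in cmp X w1 by rewrite -K1 K2 inE connect0.
  rewrite inE => /(conn_sub (subxx _) eSS) c12.
  by rewrite (connect_trans c1' c12) in nc2.
have cardU : #|cmp X @: N| = #|cmp X @: N1| + #|cmp X @: N2|.
  by rewrite NU imsetU -cardsUI disj cards0 addn0.
have k1 : 0 < #|cmp X @: N1| by apply/card_gt0P; exists (cmp X u); apply: imset_f.
have k2 : 0 < #|cmp X @: N2| by apply/card_gt0P; exists (cmp X v'); apply: imset_f.
have [D1 [D1S D1X D1c D1s]] : sepP X N1.
  apply: IH; first by rewrite NU subsetUl.
  by rewrite cardU -addn1 leq_add2l.
have [D2 [D2S D2X D2c D2s]] : sepP X N2.
  apply: IH; first by rewrite NU subsetUr.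
  by rewrite cardU addnC -addn1 leq_add2l.
exists (e |: (D1 :|: D2)); split.
- by rewrite subUset sub1set eS subUset D1S D2S.
- move=> f; rewrite !inE => /orP[/eqP ->|/orP[/D1X //|/D2X //]].
  by case/orP: (joins_end jab) => /eqP ->.
- rewrite cardU; apply: (arith k1 k2 D1c D2c (cardsUI D1 D2)).
  by rewrite cardsU1 leq_add2r leq_b1.
move=> x y xN yN cxy.
have cD1 : connect (rho X D1) x y.
  by apply: (conn_sub (subxx _) _ cxy); rewrite subsetU // subsetUl orbT.
have cD2 : connect (rho X D2) x y.
  by apply: (conn_sub (subxx _) _ cxy); rewrite subsetU // subsetUr orbT.
have ce : connect (rho X [set e]) x y.
  by apply: (conn_sub (subxx _) _ cxy); rewrite sub1set setU11.
case xN1: (x \in N1); case yN1: (y \in N1).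
- exact: D1s.
- move: xN1 yN1; rewrite !inE xN yN /= => h; by rewrite (connect_trans h ce).
- move: xN1 yN1; rewrite !inE xN yN /= => h h'; rewrite rho_csym in ce.
  by rewrite (connect_trans h' ce) in h.
- by apply: D2s => //; rewrite in_setD ?xN1 ?yN1 ?xN ?yN.
Qed.

Lemma sep (X : {set V}) : no_S_cycle ends S X -> forall N, sepP X N.
Proof.
move=> NC N; move: {2}#|_| (leqnn #|cmp X @: N|) => n; elim: n N => [|n IHn] N hN.
  apply: sep_step => // N' _; lia.
apply: sep_step => // N' _ h; apply: IHn; lia.
Qed.

End Lem.

Unset Implicit Arguments.


Lemma conn_notin (V E : finType) (ends : E -> V * V) (Z : {set V}) (F : {set E}) x y :
  connect (rho ends Z F) x y -> x \notin Z -> y \notin Z.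
Proof.
move/connectP=> [p pth ->] xZ.
have := path_notin pth; move: (mem_last x p); rewrite inE => /orP[/eqP -> //|].
by move=> h /allP; apply.
Qed.
Arguments conn_notin {V E ends Z F x y}.

Theorem lemma5 (V E : finType) (ends : E -> V * V) (S : {set E}) (k : nat)
    (X : {set V}) :
  dominant ends S k X ->
  forall Y : {set V}, Y \subset X :\: VS ends S -> Y != set0 ->
    #|Y| + 2 <= #|[set K : {set V} | [&& is_component ends S X K,
                                        interesting (VS ends S) K &
                                        sees ends Y K]]|.
Proof.
move=> [[Xk NCX] [minX domX]] Y sY Yne.
set T := VS ends S.
set Tg := [set K : {set V} | _].
rewrite leqNgt; apply/negP => small.
set N := [set z | [&& z \notin X, [exists y in Y, adjacent ends y z] &
                      interesting T (cmp ends S X z)]].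
have [D [DS DX Dc Ds]] := sep NCX N.
have subT : cmp ends S X @: N \subset Tg.
  apply/subsetP => K /imsetP[z]; rewrite inE => /and3P[zX /existsP[y /andP[yY ayz]] iz] ->.
  rewrite inE; apply/and3P; split => //.
    by apply/existsP; exists z; rewrite zX /=.
  apply/existsP; exists y; rewrite yY /=; apply/existsP; exists z.
  by rewrite ayz inE connect0.
have DY : #|D| <= #|Y|.
  have := subset_leq_card subT; move: Dc small; clear; lia.
set W := [set (ends f).1 | f in D].
set X' := (X :\: Y) :|: W.
have YX : forall y, y \in Y -> (y \in X) && (y \notin T).
  by move=> y /(subsetP sY); rewrite inE andbC.
have WT : W \subset T.
  apply/subsetP => w /imsetP[f fD ->]; rewrite inE; apply/existsP; exists f.
  by rewrite (subsetP DS f fD) eqxx.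
have WX : forall w, w \in W -> w \notin X.
  by move=> w /imsetP[f fD ->]; apply: DX.
have WX' : W \subset X' by rewrite subsetUr.
have NC' : no_S_cycle ends S X'.
  move=> vs es cyc [allv hasS].
  case/hasP: hasS => e ees eS.
  have [a [b [jab avs bvs cab]]] := conn_of_cycle cyc allv ees.
  have aX' : a \notin X' by apply: (allP allv).
  have bX' : b \notin X' by apply: (allP allv).
  have aT : a \in T := joins_VS eS jab.
  have bT : b \in T by apply: (joins_VS (y:=a) eS); rewrite /joins orbC.
  have nY : forall x, x \in T -> x \notin Y.
    by move=> x xT; apply/negP => /YX /andP[_]; rewrite xT.
  have nX : forall x, x \notin X' -> x \notin Y -> x \notin X.
    by move=> x h1 h2; apply/negP => xX; move/negP: h1; apply; rewrite in_setU in_setD h2 xX.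
  have aX := nX a aX' (nY a aT).
  have bX := nX b bX' (nY b bT).
  have eD : e \notin D.
    apply/negP => eD; have h : (ends e).1 \in W by apply: imset_f.
    case/orP: (joins_end jab) => /eqP E1; rewrite E1 in h.
      by move/(subsetP WX'): h; rewrite (negbTE aX').
    by move/(subsetP WX'): h; rewrite (negbTE bX').
  have rsub : forall u w, [&& rho ends X' [set e] u w, u \notin Y & w \notin Y] ->
      rho ends X (e |: D) u w.
    move=> u w /and3P[/and3P[uX' wX' /existsP[f /andP[fe jf]]] uY wY].
    apply/and3P; split; [exact: nX | exact: nX | ].
    apply/existsP; exists f; rewrite jf andbT in_setU1 negb_or.
    rewrite in_set1 in fe; rewrite fe /=.
    apply/negP => fD; have h : (ends f).1 \in W by apply: imset_f.
    case/orP: (joins_end jf) => /eqP E1; rewrite E1 in h; move/(subsetP WX'): h.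
      by rewrite (negbTE uX').
    by rewrite (negbTE wX').
  have csub : forall x y, connect [rel u w | [&& rho ends X' [set e] u w, u \notin Y & w \notin Y]] x y ->
      connect (rho ends X (e |: D)) x y.
    move=> x y; apply: connect_sub => u w h; apply: connect1; exact: rsub.
  have eSub1 : [set e] \subset e |: D by rewrite sub1set setU11.
  have DSub : D \subset e |: D by apply: subsetUr.
  have side : forall x z, x \notin Y -> x \notin X -> x \in T ->
      connect (rho ends X' [set e]) x z ->
      connect (rho ends X (e |: D)) x z \/ exists2 v, v \in N & connect (rho ends X (e |: D)) x v.
    move=> x z xY xX xT /connectP[p pth ->].
    case: (first_hit pth xY) => [h|[v [y1 [h1 h2 h3]]]]; first by left; exact: csub.
    right; exists v; last exact: csub.
    have hv := csub _ _ h1.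
    have vX := conn_notin hv xX.
    rewrite inE vX /=; apply/andP; split.
      move: h2 => /and3P[_ _ /existsP[f /andP[_ jf]]].
      apply/existsP; exists y1; rewrite h3 /=; apply/existsP; exists f; by rewrite /joins orbC.
    rewrite rho_csym in hv; case/connectP: hv => q qp qe.
    have hq : last v q \in T by rewrite -qe.
    have [t tT ct] := conn_T qp hq.
    by apply/set0Pn; exists t; rewrite inE tT andbT inE.
  have cr : forall x z, connect (rho ends X (e |: D)) x z -> connect (rho ends X [set e]) x z.
    by move=> x z; apply: conn_sub (subxx _) eSub1.
  have hba : connect (rho ends X' [set e]) b a by rewrite rho_csym.
  case: (side a b (nY a aT) aX aT cab) => [h|[v vN hv]].
    by apply: (cycle_of_conn eS jab aX bX _ NCX); rewrite rho_csym; exact: cr.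
  case: (side b a (nY b bT) bX bT hba) => [h|[u uN hu]].
    by apply: (cycle_of_conn eS jab aX bX _ NCX); exact: cr.
  have cvu : connect (rho ends X D) v u.
    have d1 : connect (rho ends X D) v a.
      by rewrite rho_csym; apply: conn_sub (subxx _) DSub hv.
    have d2 : connect (rho ends X D) b u by apply: conn_sub (subxx _) DSub hu.
    have d3 : connect (rho ends X D) a b.
      apply: connect1; apply/and3P; split => //; apply/existsP; exists e; by rewrite eD jab.
    exact: connect_trans (connect_trans d1 d3) d2.
  have cS := Ds v u vN uN cvu.
  apply: (cycle_of_conn eS jab aX bX _ NCX).
  have eS1 : [set e] \subset S by rewrite sub1set.
  have c1 : connect (rho ends X [set e]) u v.
    by rewrite rho_csym; apply: conn_sub (subxx _) eS1 cS.
  have c2 : connect (rho ends X [set e]) v a by rewrite rho_csym; apply: cr.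
  exact: connect_trans (connect_trans (cr _ _ hu) c1) c2.
have YsX : Y \subset X by apply/subsetP => y yY; case/andP: (YX y yY).
have c1 : #|X'| + #|(X :\: Y) :&: W| = #|X :\: Y| + #|W| := cardsUI _ _.
have c2 : #|X :\: Y| = #|X| - #|Y| := cardsDS YsX.
have c3 : #|W| <= #|D| := leq_imset_card _ _.
have c4 : #|Y| <= #|X| := subset_leq_card YsX.
have Yp : 0 < #|Y| by rewrite card_gt0.
have solX' : is_solution ends S k X'.
  split=> //; move: c1 c2 c3 c4 DY Xk; clear; lia.
have hmin := minX X' solX'.
have eqX : #|X'| = #|X| by move: c1 c2 c3 c4 DY hmin; clear; lia.
have hdom := domX X' solX' eqX.
have sub2 : (X :&: T) :|: W \subset X' :&: T.
  apply/subsetP => x; rewrite in_setU in_setI => /orP[/andP[xX xT]|xW]; rewrite in_setI.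
    apply/andP; split=> //; rewrite in_setU in_setD xX andbT; apply/orP; left.
    by apply/negP => yY; case/andP: (YX x yY) => _; rewrite xT.
  by rewrite (subsetP WT) // andbT in_setU xW orbT.
have dis : (X :&: T) :&: W = set0.
  apply/setP => x; rewrite in_setI in_setI in_set0; apply/negP => /andP[/andP[xX _] xW].
  by move: (WX x xW); rewrite xX.
have c5 := cardsUI (X :&: T) W; rewrite dis cards0 addn0 in c5.
have c6 := subset_leq_card sub2.
have Wp : 0 < #|W| by move: c1 c2 c3 c4 DY hmin Yp; clear; lia.
move: c5 c6 hdom Wp; rewrite -/T; clear; lia.
Qed.
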